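(* Let $(\rho,\theta)$ be a (contravariant) Real 2-representation of $G$ on a dg category $\mathcal C$, for a $C_2$-graded group $\pi:\hat G\to C_2$ with $G=\ker\pi$. (i) For each $\sigma\in\hat G\setminus G$, the following defines a dg duality structure $(\rho(\sigma),\Theta(\sigma))$ on $\mathcal C^G$: $\rho(\sigma)(C,u)=(\rho(\sigma)C,\{v_g\}_{g\in G})$ where $v_g=\theta_{g,\sigma}^{-1}\circ\theta_{\sigma,\sigma^{-1}g\sigma}\circ\rho(\sigma)(u^{-1}_{\sigma^{-1}g\sigma}):\rho(\sigma)C\to\rho(g)\rho(\sigma)C$, $\rho(\sigma)$ acting on morphisms as on $\mathcal C$, and $\Theta(\sigma)_{(C,u)}=\theta_{\sigma,\sigma}^{-1}\circ u_{\sigma^2}:C\to\rho(\sigma)\rho(\sigma)C$. (ii) For $\sigma_1,\sigma_2\in\hat G\setminus G$, let $\varphi^{\sigma_1,\sigma_2}_{(C,u)}=\rho(\sigma_2)(u_{\sigma_2^{-1}\sigma_1})\circ\theta^{-1}_{\sigma_2,\sigma_2^{-1}\sigma_1}:\rho(\sigma_1)C\to\rho(\sigma_2)C$. Then $(\mathrm{id}_{\mathcal C^G},\varphi^{\sigma_1,\sigma_2}):(\mathcal C^G,\rho(\sigma_1),\Theta(\sigma_1))\to(\mathcal C^G,\rho(\sigma_2),\Theta(\sigma_2))$ is a dg form equivalence, and for all $\sigma_1,\sigma_2,\sigma_3\in\hat G\setminus G$ one has $(\mathrm{id},\varphi^{\sigma_1,\sigma_3})=(\mathrm{id},\varphi^{\sigma_2,\sigma_3})\circ(\mathrm{id},\varphi^{\sigma_1,\sigma_2})$.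 In particular $\mathcal C^G$ inherits a canonical equivalence class of dg duality structures.
   Context: $k$ is a field with $\mathrm{char}\,k\ne2$; dg categories are $k$-linear and 2-periodic ($\mathbb Z/2$-graded); dg natural isomorphisms have closed degree-0 components. For $\epsilon\in C_2=\{\pm1\}$, ${}^{\epsilon}\mathcal C$ is $\mathcal C$ if $\epsilon=1$ and $\mathcal C^{op}$ if $\epsilon=-1$, similarly ${}^\epsilon F$ and ${}^\epsilon\theta$ for functors and natural transformations (the opposite of $\theta:F\Rightarrow G$ is $\theta^{op}:G^{op}\Rightarrow F^{op}$); for a natural isomorphism, $\theta^{\epsilon}$ is $\theta$ if $\epsilon=1$ and $\theta^{-1}$ if $\epsilon=-1$; likewise $u^\epsilon$ for isomorphisms. Contravariant Real 2-representation of $G$ on $\mathcal C$: dg functors $\rho(\sigma):{}^{\pi(\sigma)}\mathcal C\to\mathcal C$, natural isomorphisms $\theta_{\sigma_2,\sigma_1}:\rho(\sigma_2)\circ{}^{\pi(\sigma_2)}\rho(\sigma_1)\Rightarrow\rho(\sigma_2\sigma_1)$ and $\theta_e:\rho(e)\Rightarrow\mathrm{id}$, with $\theta_{\sigma_3\sigma_2,\sigma_1}\circ(\theta_{\sigma_3,\sigma_2}\circ\mathrm{id})=\theta_{\sigma_3,\sigma_2\sigma_1}\circ(\mathrm{id}_{\rho(\sigma_3)}\circ{}^{\pi(\sigma_3)}\theta^{\pi(\sigma_3)}_{\sigma_2,\sigma_1})$ and unit conditions $\theta_{e,\sigma}=\theta_e\circ\mathrm{id}_{\rho(\sigma)}$,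 $\theta_{\sigma,e}=\mathrm{id}_{\rho(\sigma)}\circ{}^{\pi(\sigma)}\theta_e$. $\mathcal C^G$ is the homotopy fixed point category of the restriction to $G$: objects $(C,u)$ with dg isomorphisms $u_g:C\to\rho(g)C$ ($g\in G$), $u_{g_2g_1}=\theta_{g_2,g_1}\circ\rho(g_2)(u_{g_1})\circ u_{g_2}$; morphisms $f$ with $u'_gf=\rho(g)(f)u_g$. A dg category with duality $(\mathcal C,P,\Theta)$: dg functor $P:\mathcal C^{op}\to\mathcal C$ and dg natural isomorphism $\Theta:\mathrm{id}\Rightarrow P\circ P^{op}$ with $P(\Theta_C)\circ\Theta_{P(C)}=\mathrm{id}_{P(C)}$. A dg form functor $(T,\varphi):(\mathcal C,P,\Theta)\to(\mathcal D,Q,\Xi)$: dg functor $T$ and dg natural transformation $\varphi:T\circ P\Rightarrow Q\circ T^{op}$ with $Q(\varphi_C)\circ\Xi_{T(C)}=\varphi_{P(C)}\circ T(\Theta_C)$; composition $(S,\psi)\circ(T,\varphi)=(S\circ T,\psi\star\varphi)$ with $(\psi\star\varphi)_C=\psi_{T(C)}\circ S(\varphi_C)$. A dg form equivalence is a dg form functor whose underlying functor is an equivalence and $\varphi$ an isomorphism. *)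

(* Defs.v *)
From HB Require Import structures.
From mathcomp Require Import all_boot all_order all_algebra.
From Stdlib Require Import ClassicalEpsilon.
Set Implicit Arguments. Unset Strict Implicit. Unset Printing Implicit Defensive.
Import GRing.Theory.
Local Open Scope ring_scope.

(* Objects are the elements [A : Obj] with [ob A]; all morphisms live in one
   k-module [Mor]; [hom A B f] says f : A -> B; [deg i f] says f is
   homogeneous of degree i in Z/2 (false = even, true = odd). *)
Record dgcat (k : fieldType) := DGCat {
  Obj : Type;
  ob : Obj -> Prop;
  Mor : lmodType k;
  hom : Obj -> Obj -> Mor -> Prop;
  deg : bool -> Mor -> Prop;
  comp : Mor -> Mor -> Mor;   (* comp f g = f o g *)
  idm : Obj -> Mor;
  dif : Mor -> Mor }.
Arguments Obj {k} d.
Arguments ob {k} d _.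
Arguments Mor {k} d.
Arguments hom {k} d _ _ _.
Arguments deg {k} d _ _.
Arguments comp {k} d _ _.
Arguments idm {k} d _.
Arguments dif {k} d _.

Record is_dgcat (k : fieldType) (D : dgcat k) : Prop := {
  hom0 : forall A B, ob D A -> ob D B -> hom D A B 0;
  homD : forall A B f g, ob D A -> ob D B -> hom D A B f -> hom D A B g ->
           hom D A B (f + g);
  homZ : forall A B (a : k) f, ob D A -> ob D B -> hom D A B f ->
           hom D A B (a *: f);
  deg0 : forall i, deg D i 0;
  degD : forall i f g, deg D i f -> deg D i g -> deg D i (f + g);
  degZ : forall i (a : k) f, deg D i f -> deg D i (a *: f);
  deg_decomp : forall A B f, ob D A -> ob D B -> hom D A B f ->
    exists f0 f1, [/\ hom D A B f0, deg D false f0, hom D A B f1,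
                      deg D true f1 & f = f0 + f1];
  deg_disj : forall A B f, ob D A -> ob D B -> hom D A B f ->
    deg D false f -> deg D true f -> f = 0;
  comp_hom : forall A B C f g, ob D A -> ob D B -> ob D C ->
    hom D B C f -> hom D A B g -> hom D A C (comp D f g);
  comp_deg : forall A B C i j f g, ob D A -> ob D B -> ob D C ->
    hom D B C f -> hom D A B g -> deg D i f -> deg D j g ->
    deg D (i (+) j) (comp D f g);
  compDl : forall A B C f f' g, ob D A -> ob D B -> ob D C ->
    hom D B C f -> hom D B C f' -> hom D A B g ->
    comp D (f + f') g = comp D f g + comp D f' g;
  compDr : forall A B C f g g', ob D A -> ob D B -> ob D C ->
    hom D B C f -> hom D A B g -> hom D A B g' ->
    comp D f (g + g') = comp D f g + comp D f g';
  compZl : forall A B C (a : k) f g, ob D A -> ob D B -> ob D C ->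
    hom D B C f -> hom D A B g -> comp D (a *: f) g = a *: comp D f g;
  compZr : forall A B C (a : k) f g, ob D A -> ob D B -> ob D C ->
    hom D B C f -> hom D A B g -> comp D f (a *: g) = a *: comp D f g;
  compA : forall A B C E f g h, ob D A -> ob D B -> ob D C -> ob D E ->
    hom D C E f -> hom D B C g -> hom D A B h ->
    comp D f (comp D g h) = comp D (comp D f g) h;
  id_hom : forall A, ob D A -> hom D A A (idm D A);
  id_deg : forall A, ob D A -> deg D false (idm D A);
  comp1l : forall A B f, ob D A -> ob D B -> hom D A B f -> comp D (idm D B) f = f;
  comp1r : forall A B f, ob D A -> ob D B -> hom D A B f -> comp D f (idm D A) = f;
  dif_hom : forall A B f, ob D A -> ob D B -> hom D A B f -> hom D A B (dif D f);
  difD : forall A B f g, ob D A -> ob D B -> hom D A B f -> hom D A B g ->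
    dif D (f + g) = dif D f + dif D g;
  difZ : forall A B (a : k) f, ob D A -> ob D B -> hom D A B f ->
    dif D (a *: f) = a *: dif D f;
  dif_deg : forall A B i f, ob D A -> ob D B -> hom D A B f -> deg D i f ->
    deg D (~~ i) (dif D f);
  difK : forall A B f, ob D A -> ob D B -> hom D A B f -> dif D (dif D f) = 0;
  dif_comp : forall A B C i f g, ob D A -> ob D B -> ob D C ->
    hom D B C f -> hom D A B g -> deg D i f ->
    dif D (comp D f g) = comp D (dif D f) g + (-1) ^+ i *: comp D f (dif D g) }.

Definition closed0 (k : fieldType) (D : dgcat k) A B (f : Mor D) : Prop :=
  [/\ hom D A B f, deg D false f & dif D f = 0].
Arguments closed0 {k} D A B f.
Definition is_inv (k : fieldType) (D : dgcat k) A B (f g : Mor D) : Prop :=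
  [/\ hom D B A g, comp D g f = idm D A & comp D f g = idm D B].
Arguments is_inv {k} D A B f g.
Definition dgiso (k : fieldType) (D : dgcat k) A B (f : Mor D) : Prop :=
  closed0 D A B f /\ exists g, is_inv D A B f g.
Arguments dgiso {k} D A B f.
(* the inverse of f : A -> B (a junk value if f is not invertible) *)
Definition invm (k : fieldType) (D : dgcat k) (A B : Obj D) (f : Mor D) : Mor D :=
  epsilon (inhabits 0) (is_inv D A B f).
Arguments invm {k} D A B f.
(* theta^eps for theta : A -> B, eps = true meaning eps = -1 *)
Definition tpow (k : fieldType) (D : dgcat k) (e : bool) (A B : Obj D) (f : Mor D) :=
  if e then invm D A B f else f.
Arguments tpow {k} D e A B f.

(* e = false : covariant functor C -> D;  e = true : dg functor C^op -> D,
   where C^op has Koszul-signed composition g o^op f = (-1)^{|f||g|} f o g. *)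
Definition vs (e : bool) (T : Type) (A B : T) := if e then B else A.
Definition vt (e : bool) (T : Type) (A B : T) := if e then A else B.

Record is_dgfun (k : fieldType) (e : bool) (C D : dgcat k)
    (Fo : Obj C -> Obj D) (Fm : Mor C -> Mor D) : Prop := {
  fun_ob : forall A, ob C A -> ob D (Fo A);
  fun_hom : forall A B f, ob C A -> ob C B -> hom C A B f ->
    hom D (Fo (vs e A B)) (Fo (vt e A B)) (Fm f);
  fun_D : forall A B f g, ob C A -> ob C B -> hom C A B f -> hom C A B g ->
    Fm (f + g) = Fm f + Fm g;
  fun_Z : forall A B (a : k) f, ob C A -> ob C B -> hom C A B f ->
    Fm (a *: f) = a *: Fm f;
  fun_deg : forall A B i f, ob C A -> ob C B -> hom C A B f -> deg C i f ->
    deg D i (Fm f);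
  fun_dif : forall A B f, ob C A -> ob C B -> hom C A B f ->
    Fm (dif C f) = dif D (Fm f);
  fun_id : forall A, ob C A -> Fm (idm C A) = idm D (Fo A);
  fun_comp : forall A B E i j f g, ob C A -> ob C B -> ob C E ->
    hom C B E f -> hom C A B g -> deg C i f -> deg C j g ->
    Fm (comp C f g) = if e then (-1) ^+ (i && j) *: comp D (Fm g) (Fm f)
                      else comp D (Fm f) (Fm g) }.
Arguments is_dgfun {k} e C D Fo Fm.

Record is_dgnat (k : fieldType) (e : bool) (C D : dgcat k)
    (Fo : Obj C -> Obj D) (Fm : Mor C -> Mor D)
    (Go : Obj C -> Obj D) (Gm : Mor C -> Mor D) (eta : Obj C -> Mor D) : Prop := {
  nat_closed : forall A, ob C A -> closed0 D (Fo A) (Go A) (eta A);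
  nat_natural : forall A B f, ob C A -> ob C B -> hom C A B f ->
    comp D (eta (vt e A B)) (Fm f) = comp D (Gm f) (eta (vs e A B)) }.
Arguments is_dgnat {k} e C D Fo Fm Go Gm eta.

Definition is_dgnatiso (k : fieldType) (e : bool) (C D : dgcat k)
    (Fo : Obj C -> Obj D) (Fm : Mor C -> Mor D)
    (Go : Obj C -> Obj D) (Gm : Mor C -> Mor D) (eta : Obj C -> Mor D) : Prop :=
  is_dgnat e C D Fo Fm Go Gm eta /\ forall A, ob C A -> dgiso D (Fo A) (Go A) (eta A).
Arguments is_dgnatiso {k} e C D Fo Fm Go Gm eta.

Definition is_dgequiv (k : fieldType) (C D : dgcat k)
    (To : Obj C -> Obj D) (Tm : Mor C -> Mor D) : Prop :=
  [/\ is_dgfun false C D To Tm,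
      (forall A B f', ob C A -> ob C B -> hom D (To A) (To B) f' ->
         exists! f, hom C A B f /\ Tm f = f')
    & (forall B', ob D B' -> exists A, ob C A /\ exists f, dgiso D (To A) B' f)].
Arguments is_dgequiv {k} C D To Tm.

Definition is_duality (k : fieldType) (D : dgcat k)
    (Po : Obj D -> Obj D) (Pm : Mor D -> Mor D) (Th : Obj D -> Mor D) : Prop :=
  [/\ is_dgfun true D D Po Pm,
      is_dgnatiso false D D (fun A => A) (fun f => f)
                  (fun A => Po (Po A)) (fun f => Pm (Pm f)) Th
    & forall A, ob D A -> comp D (Pm (Th A)) (Th (Po A)) = idm D (Po A)].
Arguments is_duality {k} D Po Pm Th.

Definition is_form_fun (k : fieldType) (C D : dgcat k)
    (Po : Obj C -> Obj C) (Pm : Mor C -> Mor C) (Th : Obj C -> Mor C)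
    (Qo : Obj D -> Obj D) (Qm : Mor D -> Mor D) (Xi : Obj D -> Mor D)
    (To : Obj C -> Obj D) (Tm : Mor C -> Mor D) (phi : Obj C -> Mor D) : Prop :=
  [/\ is_dgfun false C D To Tm,
      is_dgnat true C D (fun A => To (Po A)) (fun f => Tm (Pm f))
                        (fun A => Qo (To A)) (fun f => Qm (Tm f)) phi
    & forall A, ob C A ->
        comp D (Qm (phi A)) (Xi (To A)) = comp D (phi (Po A)) (Tm (Th A))].
Arguments is_form_fun {k} C D Po Pm Th Qo Qm Xi To Tm phi.

Definition is_form_equiv (k : fieldType) (C D : dgcat k)
    (Po : Obj C -> Obj C) (Pm : Mor C -> Mor C) (Th : Obj C -> Mor C)
    (Qo : Obj D -> Obj D) (Qm : Mor D -> Mor D) (Xi : Obj D -> Mor D)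
    (To : Obj C -> Obj D) (Tm : Mor C -> Mor D) (phi : Obj C -> Mor D) : Prop :=
  [/\ is_form_fun C D Po Pm Th Qo Qm Xi To Tm phi,
      is_dgequiv C D To Tm
    & forall A, ob C A -> dgiso D (To (Po A)) (Qo (To A)) (phi A)].
Arguments is_form_equiv {k} C D Po Pm Th Qo Qm Xi To Tm phi.

(* natural-transformation part of (S,psi) o (T,phi): (psi * phi)_A = psi_{T A} o S(phi_A) *)
Definition form_comp_nt (k : fieldType) (C E : dgcat k) (D : dgcat k)
    (To : Obj C -> Obj D) (Sm : Mor D -> Mor E)
    (psi : Obj D -> Mor E) (phi : Obj C -> Mor D) : Obj C -> Mor E :=
  fun A => comp E (psi (To A)) (Sm (phi A)).
Arguments form_comp_nt {k} C E D To Sm psi phi.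

(* gpi x = true means pi(x) = -1 *)
Record c2group := C2Group {
  gcar : Type;
  gmul : gcar -> gcar -> gcar;
  gone : gcar;
  ginv : gcar -> gcar;
  gpi : gcar -> bool }.
Arguments gmul : clear implicits.
Arguments gone : clear implicits.
Arguments ginv : clear implicits.
Arguments gpi : clear implicits.

Record is_c2group (Gh : c2group) : Prop := {
  gmulA : forall x y z, gmul Gh x (gmul Gh y z) = gmul Gh (gmul Gh x y) z;
  gmul1l : forall x, gmul Gh (gone Gh) x = x;
  gmul1r : forall x, gmul Gh x (gone Gh) = x;
  gmulVl : forall x, gmul Gh (ginv Gh x) x = gone Gh;
  gmulVr : forall x, gmul Gh x (ginv Gh x) = gone Gh;
  gpiM : forall x y, gpi Gh (gmul Gh x y) = gpi Gh x (+) gpi Gh y }.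

Definition Gsub (Gh : c2group) := {x : gcar Gh | ~~ gpi Gh x}.

Record r2rep (k : fieldType) (C : dgcat k) (Gh : c2group) := R2Rep {
  rho_o : gcar Gh -> Obj C -> Obj C;
  rho_m : gcar Gh -> Mor C -> Mor C;
  theta : gcar Gh -> gcar Gh -> Obj C -> Mor C;   (* theta s2 s1 A *)
  theta_e : Obj C -> Mor C }.
Arguments rho_o {k C Gh} r _ _.
Arguments rho_m {k C Gh} r _ _.
Arguments theta {k C Gh} r _ _ _.
Arguments theta_e {k C Gh} r _.

Record is_r2rep (k : fieldType) (C : dgcat k) (Gh : c2group) (R : r2rep C Gh) : Prop := {
  r2_fun : forall s, is_dgfun (gpi Gh s) C C (rho_o R s) (rho_m R s);
  r2_theta : forall s2 s1,
    is_dgnatiso (gpi Gh (gmul Gh s2 s1)) C C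
      (fun A => rho_o R s2 (rho_o R s1 A)) (fun f => rho_m R s2 (rho_m R s1 f))
      (rho_o R (gmul Gh s2 s1)) (rho_m R (gmul Gh s2 s1)) (theta R s2 s1);
  r2_theta_e : is_dgnatiso false C C (rho_o R (gone Gh)) (rho_m R (gone Gh))
                 (fun A => A) (fun f => f) (theta_e R);
  r2_assoc : forall s3 s2 s1 A, ob C A ->
    comp C (theta R (gmul Gh s3 s2) s1 A) (theta R s3 s2 (rho_o R s1 A)) =
    comp C (theta R s3 (gmul Gh s2 s1) A)
      (rho_m R s3 (tpow C (gpi Gh s3) (rho_o R s2 (rho_o R s1 A))
                          (rho_o R (gmul Gh s2 s1) A) (theta R s2 s1 A)));
  r2_unitl : forall s A, ob C A -> theta R (gone Gh) s A = theta_e R (rho_o R s A);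
  r2_unitr : forall s A, ob C A ->
    theta R s (gone Gh) A =
    rho_m R s (tpow C (gpi Gh s) (rho_o R (gone Gh) A) A (theta_e R A)) }.

Section Fix.
Variables (k : fieldType) (C : dgcat k) (Gh : c2group) (R : r2rep C Gh).

(* u_x for x in Ghat (0 if x is not in G) *)
Definition gat (u : Gsub Gh -> Mor C) (x : gcar Gh) : Mor C :=
  if insub x is Some h then u h else 0.

Definition hfp (X : Obj C * (Gsub Gh -> Mor C)) : Prop :=
  [/\ ob C X.1,
      (forall g : Gsub Gh, dgiso C X.1 (rho_o R (val g) X.1) (X.2 g))
    & (forall g2 g1 : Gsub Gh,
         gat X.2 (gmul Gh (val g2) (val g1)) =
         comp C (theta R (val g2) (val g1) X.1)
                (comp C (rho_m R (val g2) (X.2 g1)) (X.2 g2)))].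

Definition fixcat : dgcat k := {|
  Obj := Obj C * (Gsub Gh -> Mor C);
  ob := hfp;
  Mor := Mor C;
  hom := fun X Y f => hom C X.1 Y.1 f /\
           forall g : Gsub Gh, comp C (Y.2 g) f = comp C (rho_m R (val g) f) (X.2 g);
  deg := deg C;
  comp := comp C;
  idm := fun X => idm C X.1;
  dif := dif C |}.

Definition Pobj (s : gcar Gh) (X : Obj C * (Gsub Gh -> Mor C)) :
    Obj C * (Gsub Gh -> Mor C) :=
  (rho_o R s X.1,
   fun g : Gsub Gh =>
     let h := gmul Gh (ginv Gh s) (gmul Gh (val g) s) in
     comp C (invm C (rho_o R (val g) (rho_o R s X.1))
                    (rho_o R (gmul Gh (val g) s) X.1) (theta R (val g) s X.1))
       (comp C (theta R s h X.1)
          (rho_m R s (invm C X.1 (rho_o R h X.1) (gat X.2 h))))).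

Definition Theta (s : gcar Gh) (X : Obj C * (Gsub Gh -> Mor C)) : Mor C :=
  comp C (invm C (rho_o R s (rho_o R s X.1)) (rho_o R (gmul Gh s s) X.1)
                 (theta R s s X.1))
         (gat X.2 (gmul Gh s s)).

Definition phi (s1 s2 : gcar Gh) (X : Obj C * (Gsub Gh -> Mor C)) : Mor C :=
  let t := gmul Gh (ginv Gh s2) s1 in
  comp C (rho_m R s2 (gat X.2 t))
         (invm C (rho_o R s2 (rho_o R t X.1)) (rho_o R (gmul Gh s2 t) X.1)
                 (theta R s2 t X.1)).

End Fix.

(* Main.v *)
Require Import Defs.
From HB Require Import structures.
From mathcomp Require Import all_boot all_order all_algebra.
From Stdlib Require Import ClassicalEpsilon.
Set Implicit Arguments. Unset Strict Implicit. Unset Printing Implicit Defensive.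
Import GRing.Theory.
Local Notation hom := Defs.hom.
Local Notation comp := Defs.comp.
Local Notation idm := Defs.idm.
Local Open Scope ring_scope.

Section Grp.
Variable Gh : c2group.
Hypothesis HG : is_c2group Gh.
Local Notation "x * y" := (gmul Gh x y).
Lemma gA x y z : x * (y * z) = (x * y) * z. Proof. exact: gmulA. Qed.
Lemma gKV x y : (x * y) * ginv Gh y = x.
Proof. by rewrite -gA gmulVr ?gmul1r. Qed.
Lemma gVK x y : (x * ginv Gh y) * y = x.
Proof. by rewrite -gA gmulVl ?gmul1r. Qed.
Lemma gV1 x : ginv Gh x * x = gone Gh. Proof. exact: gmulVl. Qed.
Lemma g1V x : x * ginv Gh x = gone Gh. Proof. exact: gmulVr. Qed.
Lemma g1l x : gone Gh * x = x. Proof. exact: gmul1l. Qed.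
Lemma g1r x : x * gone Gh = x. Proof. exact: gmul1r. Qed.
Lemma ginv_uniq x y : x * y = gone Gh -> ginv Gh x = y.
Proof. move=> e; by rewrite -[ginv Gh x]g1r -e gA gV1 g1l. Qed.
Lemma ginvM x y : ginv Gh (x * y) = ginv Gh y * ginv Gh x.
Proof. apply: ginv_uniq; by rewrite gA gKV g1V. Qed.
Lemma ginvK x : ginv Gh (ginv Gh x) = x.
Proof. apply: ginv_uniq; exact: gV1. Qed.
Lemma ginv1 : ginv Gh (gone Gh) = gone Gh.
Proof. apply: ginv_uniq; exact: g1l. Qed.
Lemma gpi1 : gpi Gh (gone Gh) = false.
Proof. have := gpiM HG (gone Gh) (gone Gh); rewrite g1l. by case: (gpi Gh _). Qed.
Lemma gpiV x : gpi Gh (ginv Gh x) = gpi Gh x.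
Proof. have := gpiM HG (ginv Gh x) x; rewrite gV1 gpi1.
by case: (gpi Gh x); case: (gpi Gh (ginv Gh x)). Qed.
End Grp.

Ltac gnorm := rewrite ?ginvM ?ginvK ?ginv1;
  repeat progress (rewrite ?gA ?gKV ?gVK ?gV1 ?g1V ?g1l ?g1r).
Lemma xxx0 (V : zmodType) (x : V) : x = x + x -> x = 0.
Proof. move=> e; apply/esym; by rewrite -(subrr x) {1}e addrK. Qed.

Section Main.
Variables (k : fieldType) (C : dgcat k) (Gh : c2group) (R : r2rep C Gh).
Hypothesis HC : is_dgcat C.
Hypothesis HG : is_c2group Gh.
Hypothesis HR : is_r2rep R.

Local Notation "f ∘ g" := (comp C f g) (at level 38, right associativity).
Local Notation "x * y" := (gmul Gh x y).
Local Notation ρ := (rho_o R).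
Local Notation ρm := (rho_m R).
Local Notation θ := (theta R).
Local Notation gi := (ginv Gh).

Ltac gn := rewrite ?(ginvM HG) ?(ginvK HG) ?(ginv1 HG);
  repeat progress (rewrite ?(gA HG) ?(gKV HG) ?(gVK HG) ?(gV1 HG) ?(g1V HG) ?(g1l HG) ?(g1r HG)).

Definition Hm A B f := [/\ ob C A, ob C B & hom C A B f].
Definition Cl A B f := Hm A B f /\ deg C false f /\ dif C f = 0.
Definition Pair A B f g := [/\ Cl A B f, Cl B A g, g ∘ f = idm C A & f ∘ g = idm C B].


Lemma Cl_Hm A B f : Cl A B f -> Hm A B f. Proof. rewrite /Hm /Cl /Pair ?/Iso. by case. Qed.
Lemma Hm_cast A B A' B' f : Hm A B f -> A = A' -> B = B' -> Hm A' B' f.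
Proof. rewrite /Hm /Cl /Pair ?/Iso. by move=> ? <- <-. Qed.
Lemma Cl_cast A B A' B' f : Cl A B f -> A = A' -> B = B' -> Cl A' B' f.
Proof. rewrite /Hm /Cl /Pair ?/Iso. by move=> ? <- <-. Qed.
Lemma Pair_cast A B A' B' f g : Pair A B f g -> A = A' -> B = B' -> Pair A' B' f g.
Proof. rewrite /Hm /Cl /Pair ?/Iso. by move=> ? <- <-. Qed.
Lemma Pair_sym A B f g : Pair A B f g -> Pair B A g f.
Proof. rewrite /Hm /Cl /Pair ?/Iso. by case=> *; split. Qed.

Lemma Hm_comp A B D f g : Hm B D f -> Hm A B g -> Hm A D (f ∘ g).
Proof. rewrite /Hm /Cl /Pair ?/Iso. case=> oB oD hf [oA _ hg]; split=> //; exact: (comp_hom HC oA oB oD hf hg). Qed.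

Lemma comp0l A B D h : ob C A -> ob C B -> ob C D -> hom C A B h -> comp C (0 : Mor C) h = 0.
Proof. rewrite /Hm /Cl /Pair ?/Iso.
move=> oA oB oD hh; have h0 := hom0 HC oB oD.
have := compDl HC oA oB oD h0 h0 hh; rewrite addr0; exact: xxx0.
Qed.
Lemma comp0r A B D f : ob C A -> ob C B -> ob C D -> hom C B D f -> comp C f (0 : Mor C) = 0.
Proof. rewrite /Hm /Cl /Pair ?/Iso.
move=> oA oB oD hf; have h0 := hom0 HC oA oB.
have := compDr HC oA oB oD hf h0 h0; rewrite addr0; exact: xxx0.
Qed.

Lemma Cl_comp A B D f g : Cl B D f -> Cl A B g -> Cl A D (f ∘ g).
Proof. rewrite /Hm /Cl /Pair ?/Iso.
case=> [[oB oD hf] [df xf]] [[oA _ hg] [dg xg]]; split; first by split=> //; exact: (comp_hom HC oA oB oD hf hg).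
split; first exact: (comp_deg HC oA oB oD hf hg df dg).
rewrite (dif_comp HC oA oB oD hf hg df) xf xg expr0 scale1r.
by rewrite (comp0l oA oB oD hg) (comp0r oA oB oD hf) addr0.
Qed.

Lemma dif_id A : ob C A -> dif C (idm C A) = 0.
Proof. rewrite /Hm /Cl /Pair ?/Iso.
move=> oA; have hi := id_hom HC oA.
have := dif_comp HC oA oA oA hi hi (id_deg HC oA).
rewrite (comp1l HC oA oA hi) expr0 scale1r.
rewrite (comp1r HC oA oA (dif_hom HC oA oA hi)) (comp1l HC oA oA (dif_hom HC oA oA hi)).
move=> e; apply: xxx0; by rewrite {1}e.
Qed.

Lemma Cl_id A : ob C A -> Cl A A (idm C A).
Proof. rewrite /Hm /Cl /Pair ?/Iso. move=> oA; split; first by split=> //; exact: id_hom. split; [exact: id_deg | exact: dif_id]. Qed.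

Lemma cA A B D E f g h : Hm D E f -> Hm B D g -> Hm A B h -> (f ∘ g) ∘ h = f ∘ g ∘ h.
Proof. rewrite /Hm /Cl /Pair ?/Iso. case=> oD oE hf [oB _ hg] [oA _ hh]; by rewrite (Defs.compA HC oA oB oD oE hf hg hh). Qed.
Lemma c1l A B f : Hm A B f -> idm C B ∘ f = f.
Proof. rewrite /Hm. case=> oA oB hf; exact: (comp1l HC oA oB hf). Qed.
Lemma c1r A B f : Hm A B f -> f ∘ idm C A = f.
Proof. rewrite /Hm. case=> oA oB hf; exact: (comp1r HC oA oB hf). Qed.

Lemma inv_deg A B f g : Cl A B f -> Hm B A g -> g ∘ f = idm C A -> f ∘ g = idm C B -> Cl B A g.
Proof. rewrite /Hm /Cl /Pair ?/Iso.
move=> [[oA oB hf] [df xf]] [_ _ hg] e1 e2.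
have [g0 [g1 [hg0 dg0 hg1 dg1 eg]]] := deg_decomp HC oB oA hg.
have fg1 : f ∘ g1 = 0.
  have e : f ∘ g1 = idm C B - f ∘ g0.
    by rewrite -e2 eg (compDr HC oB oA oB hf hg0 hg1) addrC addKr.
  apply: (deg_disj HC oB oB (comp_hom HC oB oA oB hf hg1)).
    rewrite e; apply: (degD HC); first exact: id_deg.
    rewrite -scaleN1r; apply: (degZ HC).
    exact: (comp_deg HC oB oA oB hf hg0 df dg0).
  exact: (comp_deg HC oB oA oB hf hg1 df dg1).
have g1z : g1 = 0.
  by rewrite -(comp1l HC oB oA hg1) -e1 -(Defs.compA HC oB oA oB oA) // fg1 (comp0r oB oB oA).
have gg0 : g = g0 by rewrite eg g1z addr0.
split; first by split.
split; first by rewrite gg0.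
have : f ∘ dif C g = 0.
  have := dif_comp HC oB oA oB hf hg df.
  by rewrite e2 dif_id // xf expr0 scale1r (comp0l oB oA oB hg) add0r => <-.
move=> e.
by rewrite -(comp1l HC oB oA (dif_hom HC oB oA hg)) -e1 -(Defs.compA HC oB oA oB oA) ?e ?(comp0r oB oB oA) //;
  exact: dif_hom.
Qed.

Lemma invm_spec A B f g : is_inv C A B f g -> is_inv C A B f (invm C A B f).
Proof. rewrite /Hm /Cl /Pair ?/Iso. move=> H; rewrite /invm; apply: epsilon_spec; by exists g. Qed.

Definition Iso A B f := Cl A B f /\ exists g, is_inv C A B f g.

Lemma Iso_Pair A B f : Iso A B f -> Pair A B f (invm C A B f).
Proof.
case=> Cf [g Hg]; have [hi e1 e2] := invm_spec Hg.
have Ci : Cl B A (invm C A B f).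
  have [[oA oB _] _] := Cf.
  exact: (inv_deg Cf (And3 oB oA hi) e1 e2).
by split.
Qed.

Lemma Pair_Iso A B f g : Pair A B f g -> Iso A B f.
Proof. rewrite /Iso /Pair /Cl /Hm. case=> Cf [[? ? ?] _] e1 e2; split=> //; exists g; by split. Qed.

Lemma dgiso_Iso A B f : ob C A -> ob C B -> dgiso C A B f -> Iso A B f.
Proof. rewrite /Iso /Pair /Cl /Hm. move=> oA oB [[? ? ?] ?]; split=> //; by split. Qed.

Lemma Pair_inv A B f g : Pair A B f g -> g = invm C A B f.
Proof. rewrite /Iso /Pair /Cl /Hm.
move=> P; have [_ [[oB oA hg] _] e1 e2] := P.
have [_ [[_ _ hi] _] e1' e2'] := Iso_Pair (Pair_Iso P).
have [[[_ _ hf] _] _ _ _] := P.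
rewrite -(comp1l HC oB oA hg) -e1' -(Defs.compA HC oB oA oB oA) // e2.
by rewrite (comp1r HC oB oA hi).
Qed.

Lemma cancelL A B D f g t : Pair A B f g -> Hm D A t -> g ∘ f ∘ t = t.
Proof. rewrite /Iso /Pair /Cl /Hm.
move=> [[[oA oB hf] _] [[_ _ hg] _] e1 _] [oD _ ht].
by rewrite (Defs.compA HC oD oA oB oA) // e1 (comp1l HC oD oA).
Qed.
Lemma cancelR A B D f g t : Pair A B f g -> Hm D B t -> f ∘ g ∘ t = t.
Proof. rewrite /Iso /Pair /Cl /Hm. move/Pair_sym; exact: cancelL. Qed.
Lemma cancelL0 A B f g : Pair A B f g -> g ∘ f = idm C A.
Proof. rewrite /Iso /Pair /Cl /Hm. by case. Qed.
Lemma cancelR0 A B f g : Pair A B f g -> f ∘ g = idm C B.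
Proof. rewrite /Iso /Pair /Cl /Hm. by case. Qed.

End Main.
Section Fun.
Variables (k : fieldType) (C : dgcat k).
Hypothesis HC : is_dgcat C.
Local Notation "f ∘ g" := (comp C f g) (at level 38, right associativity).
Variables (e : bool) (Fo : Obj C -> Obj C) (Fm : Mor C -> Mor C).
Hypothesis HF : is_dgfun e C C Fo Fm.

Lemma F0 A B : ob C A -> ob C B -> Fm 0 = 0.
Proof.
move=> oA oB; have h0 := hom0 HC oA oB.
have := fun_D HF oA oB h0 h0; rewrite addr0; exact: xxx0.
Qed.

Lemma F_Hm A B f : Hm A B f -> Hm (Fo (vs e A B)) (Fo (vt e A B)) (Fm f).
Proof.
case=> oA oB hf; move: (fun_ob HF) (fun_hom HF oA oB hf).
case: e => oF hF; split; try exact: hF; exact: oF.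
Qed.

Lemma F_Cl A B f : Cl A B f -> Cl (Fo (vs e A B)) (Fo (vt e A B)) (Fm f).
Proof.
case=> hf [df xf]; split; first exact: F_Hm.
case: hf => oA oB hf; split; first exact: (fun_deg HF oA oB hf).
by rewrite -(fun_dif HF oA oB hf) xf (F0 oA oB).
Qed.

Lemma F_comp_l A B D i f g : ob C A -> ob C B -> ob C D -> hom C B D f -> deg C i f ->
  hom C A B g -> (e -> i = false) -> Fm (f ∘ g) = if e then Fm g ∘ Fm f else Fm f ∘ Fm g.
Proof.
move=> oA oB oD hf df hg ei.
have [g0 [g1 [hg0 dg0 hg1 dg1 eg]]] := deg_decomp HC oA oB hg.
rewrite eg (compDr HC oA oB oD hf hg0 hg1).
rewrite (fun_D HF oA oD (comp_hom HC oA oB oD hf hg0) (comp_hom HC oA oB oD hf hg1)).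
rewrite (fun_comp HF oA oB oD hf hg0 df dg0) (fun_comp HF oA oB oD hf hg1 df dg1).
rewrite (fun_D HF oA oB hg0 hg1).
have hF := fun_hom HF; have oF := fun_ob HF.
move: hF ei; case: e => hF ei.
  rewrite (ei erefl) /= expr0 !scale1r.
  by rewrite (compDl HC (oF _ oD) (oF _ oB) (oF _ oA) (hF _ _ _ oA oB hg0) (hF _ _ _ oA oB hg1) (hF _ _ _ oB oD hf)).
by rewrite (compDr HC (oF _ oA) (oF _ oB) (oF _ oD) (hF _ _ _ oB oD hf) (hF _ _ _ oA oB hg0) (hF _ _ _ oA oB hg1)).
Qed.

Lemma F_comp_r A B D j f g : ob C A -> ob C B -> ob C D -> hom C B D f ->
  hom C A B g -> deg C j g -> (e -> j = false) -> Fm (f ∘ g) = if e then Fm g ∘ Fm f else Fm f ∘ Fm g.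
Proof.
move=> oA oB oD hf hg dg ej.
have [f0 [f1 [hf0 df0 hf1 df1 ef]]] := deg_decomp HC oB oD hf.
rewrite ef (compDl HC oA oB oD hf0 hf1 hg).
rewrite (fun_D HF oA oD (comp_hom HC oA oB oD hf0 hg) (comp_hom HC oA oB oD hf1 hg)).
rewrite (fun_comp HF oA oB oD hf0 hg df0 dg) (fun_comp HF oA oB oD hf1 hg df1 dg).
rewrite (fun_D HF oB oD hf0 hf1).
have hF := fun_hom HF; have oF := fun_ob HF.
move: hF ej; case: e => hF ej.
  rewrite (ej erefl) /= ?andbF expr0 !scale1r.
  by rewrite (compDr HC (oF _ oD) (oF _ oB) (oF _ oA) (hF _ _ _ oA oB hg) (hF _ _ _ oB oD hf0) (hF _ _ _ oB oD hf1)).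
by rewrite (compDl HC (oF _ oA) (oF _ oB) (oF _ oD) (hF _ _ _ oB oD hf0) (hF _ _ _ oB oD hf1) (hF _ _ _ oA oB hg)).
Qed.

Lemma F_comp_cov A B D f g : e = false -> Hm B D f -> Hm A B g -> Fm (f ∘ g) = Fm f ∘ Fm g.
Proof.
move=> e0 [oB oD hf] [oA _ hg].
have [f0 [f1 [hf0 df0 hf1 df1 ef]]] := deg_decomp HC oB oD hf.
rewrite ef (compDl HC oA oB oD hf0 hf1 hg).
rewrite (fun_D HF oA oD (comp_hom HC oA oB oD hf0 hg) (comp_hom HC oA oB oD hf1 hg)).
rewrite (F_comp_l oA oB oD hf0 df0 hg) ?e0 // (F_comp_l oA oB oD hf1 df1 hg) ?e0 //.
rewrite (fun_D HF oB oD hf0 hf1).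
have hF := fun_hom HF; have oF := fun_ob HF.
move: hF; rewrite e0 => hF.
by rewrite (compDl HC (oF _ oA) (oF _ oB) (oF _ oD) (hF _ _ _ oB oD hf0) (hF _ _ _ oB oD hf1) (hF _ _ _ oA oB hg)).
Qed.

Lemma F_comp_Cl_l A B D f g : Cl B D f -> Hm A B g ->
  Fm (f ∘ g) = if e then Fm g ∘ Fm f else Fm f ∘ Fm g.
Proof. case=> [[oB oD hf] [df _]] [oA _ hg]; exact: (F_comp_l oA oB oD hf df hg). Qed.
Lemma F_comp_Cl_r A B D f g : Hm B D f -> Cl A B g ->
  Fm (f ∘ g) = if e then Fm g ∘ Fm f else Fm f ∘ Fm g.
Proof. case=> oB oD hf [[oA _ hg] [dg _]]; exact: (F_comp_r oA oB oD hf hg dg). Qed.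

Lemma F_Pair A B f g : Pair A B f g ->
  if e then Pair (Fo A) (Fo B) (Fm g) (Fm f) else Pair (Fo A) (Fo B) (Fm f) (Fm g).
Proof.
case=> Cf Cg e1 e2.
have C1 := F_Cl Cf; have C2 := F_Cl Cg.
have [[oA oB _] _] := Cf.
have E1 := F_comp_Cl_l Cg (Cl_Hm Cf); have E2 := F_comp_Cl_l Cf (Cl_Hm Cg).
rewrite e1 (fun_id HF oA) in E1; rewrite e2 (fun_id HF oB) in E2.
move: C1 C2 E1 E2; case: e => /= C1 C2 E1 E2; split=> //.
Qed.

End Fun.
Section Rep.
Variables (k : fieldType) (C : dgcat k) (Gh : c2group) (R : r2rep C Gh).
Hypothesis HC : is_dgcat C.
Hypothesis HG : is_c2group Gh.
Hypothesis HR : is_r2rep R.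

Local Notation "f ∘ g" := (comp C f g) (at level 38, right associativity).
Local Notation "x * y" := (gmul Gh x y).
Local Notation ρ := (rho_o R).
Local Notation ρm := (rho_m R).
Local Notation θ := (theta R).
Local Notation gi := (ginv Gh).
Local Notation gp := (gpi Gh).

Definition θi a b A := invm C (ρ a (ρ b A)) (ρ (a * b) A) (θ a b A).
Definition ui (X : Obj C * (Gsub Gh -> Mor C)) x := invm C X.1 (ρ x X.1) (gat X.2 x).

Lemma ob_rho s A : ob C A -> ob C (ρ s A).
Proof. exact: (fun_ob (r2_fun HR s)). Qed.

Lemma Hm_rho_o s A B A' B' f : gp s = true -> Hm A B f -> A' = ρ s B -> B' = ρ s A -> Hm A' B' (ρm s f).
Proof. move=> es hf -> ->; have := F_Hm (r2_fun HR s) hf; by rewrite es. Qed.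
Lemma Hm_rho_e s A B A' B' f : gp s = false -> Hm A B f -> A' = ρ s A -> B' = ρ s B -> Hm A' B' (ρm s f).
Proof. move=> es hf -> ->; have := F_Hm (r2_fun HR s) hf; by rewrite es. Qed.
Lemma Cl_rho_o s A B A' B' f : gp s = true -> Cl A B f -> A' = ρ s B -> B' = ρ s A -> Cl A' B' (ρm s f).
Proof. move=> es hf -> ->; have := F_Cl HC (r2_fun HR s) hf; by rewrite es. Qed.
Lemma Cl_rho_e s A B A' B' f : gp s = false -> Cl A B f -> A' = ρ s A -> B' = ρ s B -> Cl A' B' (ρm s f).
Proof. move=> es hf -> ->; have := F_Cl HC (r2_fun HR s) hf; by rewrite es. Qed.
Lemma Pair_rho_o s A B A' B' f g : gp s = true -> Pair A B f g -> A' = ρ s A -> B' = ρ s B ->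
  Pair A' B' (ρm s g) (ρm s f).
Proof. move=> es hf -> ->; have := F_Pair HC (r2_fun HR s) hf; by rewrite es. Qed.
Lemma Pair_rho_e s A B A' B' f g : gp s = false -> Pair A B f g -> A' = ρ s A -> B' = ρ s B ->
  Pair A' B' (ρm s f) (ρm s g).
Proof. move=> es hf -> ->; have := F_Pair HC (r2_fun HR s) hf; by rewrite es. Qed.

Lemma Pair_th a b A A' B' : ob C A -> A' = ρ a (ρ b A) -> B' = ρ (a * b) A ->
  Pair A' B' (θ a b A) (θi a b A).
Proof.
move=> oA -> ->; apply: (Iso_Pair HC); apply: dgiso_Iso; try by do ! apply: ob_rho.
exact: (proj2 (r2_theta HR a b) A oA).
Qed.
Lemma Cl_th a b A A' B' : ob C A -> A' = ρ a (ρ b A) -> B' = ρ (a * b) A -> Cl A' B' (θ a b A).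
Proof. by move=> oA e1 e2; case: (Pair_th oA e1 e2). Qed.
Lemma Cl_thi a b A A' B' : ob C A -> A' = ρ (a * b) A -> B' = ρ a (ρ b A) -> Cl A' B' (θi a b A).
Proof. by move=> oA e1 e2; case: (Pair_th oA e2 e1). Qed.
Lemma Cl_idc A A' B' : ob C A -> A' = A -> B' = A -> Cl A' B' (idm C A).
Proof. move=> oA -> ->; exact: Cl_id. Qed.

Lemma gat_val (u : Gsub Gh -> Mor C) (g : Gsub Gh) : gat u (val g) = u g.
Proof. by rewrite /gat valK. Qed.
Lemma gatS (u : Gsub Gh -> Mor C) x (px : ~~ gp x) : gat u x = u (Sub x px).
Proof. by rewrite /gat insubT. Qed.

Lemma hfp_ob X : hfp R X -> ob C X.1. Proof. by case. Qed.
Lemma hfp_Pair X x A' B' : hfp R X -> gp x = false -> A' = X.1 -> B' = ρ x X.1 ->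
  Pair A' B' (gat X.2 x) (ui X x).
Proof.
move=> [oX Hi _] ex -> ->; have px : ~~ gp x by rewrite ex.
apply: (Iso_Pair HC); apply: dgiso_Iso => //; first exact: ob_rho.
rewrite (gatS _ px); exact: (Hi (Sub x px)).
Qed.
Lemma Cl_u X x A' B' : hfp R X -> gp x = false -> A' = X.1 -> B' = ρ x X.1 -> Cl A' B' (gat X.2 x).
Proof. by move=> *; case: (@hfp_Pair X x A' B'). Qed.
Lemma Cl_ui X x A' B' : hfp R X -> gp x = false -> A' = ρ x X.1 -> B' = X.1 -> Cl A' B' (ui X x).
Proof. by move=> *; case: (@hfp_Pair X x B' A'). Qed.
Lemma hfp_coc X x y xy : hfp R X -> gp x = false -> gp y = false -> x * y = xy ->
  gat X.2 xy = θ x y X.1 ∘ ρm x (gat X.2 y) ∘ gat X.2 x.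
Proof.
move=> [oX _ Hc] ex ey <-; have px : ~~ gp x by rewrite ex.
have py : ~~ gp y by rewrite ey.
have := Hc (Sub x px) (Sub y py); rewrite /= -(gatS _ px) -(gatS _ py) => ->.
done.
Qed.


Lemma Hm_id A A' B' : ob C A -> A' = A -> B' = A -> Hm A' B' (idm C A).
Proof. move=> oA -> ->; apply: Cl_Hm; exact: Cl_id. Qed.

Ltac gn := rewrite ?(ginvM HG) ?(ginvK HG) ?(ginv1 HG);
  repeat progress (rewrite ?(gA HG) ?(gKV HG) ?(gVK HG) ?(gV1 HG) ?(g1V HG) ?(g1l HG) ?(g1r HG)).
Ltac geq := first [reflexivity | gn; reflexivity].
Ltac objeq := first [reflexivity | apply (f_equal2 (rho_o R)); [geq | objeq]].
Ltac gpit := rewrite /= ?(gpiM HG) ?(gpiV HG) ?(gpi1 HG);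
  repeat (match goal with H : gpi Gh ?x = _ |- context [gpi Gh ?x] => rewrite H end); done.
Ltac obt := lazymatch goal with
  | |- ob C (rho_o R _ _) => apply ob_rho; obt
  | |- _ => first [assumption | apply hfp_ob; assumption]
  end.
Ltac tyC := lazymatch goal with
  | |- Cl _ _ (comp C _ _) => eapply (Cl_comp HC); [tyC | tyC]
  | |- Cl _ _ (rho_m R _ _) => first [ eapply Cl_rho_o; [gpit | tyC | objeq | objeq]
                                     | eapply Cl_rho_e; [gpit | tyC | objeq | objeq] ]
  | |- Cl _ _ (theta R _ _ _) => eapply Cl_th; [obt | objeq | objeq]
  | |- Cl _ _ (θi _ _ _) => eapply Cl_thi; [obt | objeq | objeq]
  | |- Cl _ _ (gat _ _) => eapply Cl_u; [eassumption | gpit | objeq | objeq]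
  | |- Cl _ _ (ui _ _) => eapply Cl_ui; [eassumption | gpit | objeq | objeq]
  | |- Cl _ _ (idm C _) => eapply Cl_idc; [obt | objeq | objeq]
  | |- Cl _ _ _ => eapply Cl_cast; [eassumption | objeq | objeq]
  end.
Ltac tyH := lazymatch goal with
  | |- Hm _ _ (comp C _ _) => eapply (Hm_comp HC); [tyH | tyH]
  | |- Hm _ _ (rho_m R _ _) => first [ eapply Hm_rho_o; [gpit | tyH | objeq | objeq]
                                     | eapply Hm_rho_e; [gpit | tyH | objeq | objeq] ]
  | |- Hm _ _ (idm C _) => eapply Hm_id; [obt | objeq | objeq]
  | |- Hm _ _ _ => first [ eapply Hm_cast; [eassumption | objeq | objeq] | apply Cl_Hm; tyC ]
  end.
Ltac tyP := lazymatch goal with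
  | |- Pair _ _ (theta R _ _ _) (θi _ _ _) => eapply Pair_th; [obt | objeq | objeq]
  | |- Pair _ _ (θi _ _ _) (theta R _ _ _) => apply Pair_sym; tyP
  | |- Pair _ _ (gat _ _) (ui _ _) => eapply hfp_Pair; [eassumption | gpit | objeq | objeq]
  | |- Pair _ _ (ui _ _) (gat _ _) => apply Pair_sym; tyP
  | |- Pair _ _ (rho_m R ?s _) (rho_m R ?s _) =>
       first [ eapply Pair_rho_e; [gpit | tyP | objeq | objeq]
             | eapply Pair_rho_o; [gpit | tyP | objeq | objeq] ]
  | |- Pair _ _ _ _ => first [eapply Pair_cast; [eassumption | objeq | objeq]
                            | apply Pair_sym; eapply Pair_cast; [eassumption | objeq | objeq]]
  end.
Ltac sc := first [ tyH | tyC | tyP | gpit | obt | geq | eassumption ].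
Ltac onlymain := lazymatch goal with
  | |- Hm _ _ _ => fail 0 "unsolved side condition"
  | |- Cl _ _ _ => fail 0 "unsolved side condition"
  | |- Pair _ _ _ _ => fail 0 "unsolved side condition"
  | |- ob _ _ => fail 0 "unsolved side condition"
  | |- hfp _ _ => fail 0 "unsolved side condition"
  | |- is_true _ => fail 0 "unsolved side condition"
  | |- @eq bool _ _ => fail 0 "unsolved side condition"
  | |- @eq (gcar _) _ _ => fail 0 "unsolved side condition"
  | |- _ => idtac end.
Tactic Notation "rw" open_constr(L) := erewrite L; try solve [sc]; onlymain.
Tactic Notation "rwl" open_constr(L) := erewrite <- L; try solve [sc]; onlymain.

Lemma rhoS_e s A B D f g : gp s = false -> Hm B D f -> Hm A B g -> ρm s (f ∘ g) = ρm s f ∘ ρm s g.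
Proof. move=> es; exact: (F_comp_cov HC (r2_fun HR s)). Qed.
Lemma rhoS_ol s A B D f g : gp s = true -> Cl B D f -> Hm A B g -> ρm s (f ∘ g) = ρm s g ∘ ρm s f.
Proof. move=> es hf hg; have := F_comp_Cl_l HC (r2_fun HR s) hf hg; by rewrite es. Qed.
Lemma rhoS_or s A B D f g : gp s = true -> Hm B D f -> Cl A B g -> ρm s (f ∘ g) = ρm s g ∘ ρm s f.
Proof. move=> es hf hg; have := F_comp_Cl_r HC (r2_fun HR s) hf hg; by rewrite es. Qed.
Lemma rho_id s A : ob C A -> ρm s (idm C A) = idm C (ρ s A).
Proof. exact: (fun_id (r2_fun HR s)). Qed.

Ltac rhos := first [rw rhoS_e | rw rhoS_ol | rw rhoS_or | rw rho_id].
Ltac canc := first [ match goal with |- context [comp C ?g (comp C ?f ?t)] =>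
                       erewrite (cancelL HC (f:=f) (g:=g) (t:=t)); [ try reflexivity | tyP | tyH] end
                   | match goal with |- context [comp C ?g ?f] =>
                       erewrite (cancelL0 (f:=f) (g:=g)); [ try reflexivity | tyP] end ].
Ltac nrm := repeat (first [rhos | rw (cA HC) | rw (c1l HC) | canc | progress gn]); try reflexivity.

Lemma tail_intro A B l r : Hm A B l -> Hm A B r -> l ∘ idm C A = r ∘ idm C A -> l = r.
Proof. move=> hl hr; by rewrite (c1r HC hl) (c1r HC hr). Qed.
Ltac ti := eapply tail_intro; [tyH | tyH | ].

Lemma nat_e a b c A B D f t : gp (a * b) = false -> a * b = c -> Hm A B f -> Hm D (ρ a (ρ b A)) t ->
  θ a b B ∘ ρm a (ρm b f) ∘ t = ρm c f ∘ θ a b A ∘ t.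
Proof.
move=> e ec hf ht; subst c; have [oA oB hf'] := hf.
have := nat_natural (proj1 (r2_theta HR a b)) oA oB hf'; rewrite e /= => E.
case ea: (gp a); case eb: (gp b); move: (e); rewrite (gpiM HG) ea eb // => _; rwl (cA HC (f := θ a b B)); rewrite E; rw (cA HC).
Qed.
Lemma nat_o a b c A B D f t : gp (a * b) = true -> a * b = c -> Hm A B f -> Hm D (ρ a (ρ b B)) t ->
  θ a b A ∘ ρm a (ρm b f) ∘ t = ρm c f ∘ θ a b B ∘ t.
Proof.
move=> e ec hf ht; subst c; have [oA oB hf'] := hf.
have := nat_natural (proj1 (r2_theta HR a b)) oA oB hf'; rewrite e /= => E.
case ea: (gp a); case eb: (gp b); move: (e); rewrite (gpiM HG) ea eb // => _; rwl (cA HC (f := θ a b A)); rewrite E; rw (cA HC).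
Qed.


Lemma nati_e a b c A B D f t : gp (a * b) = false -> a * b = c -> Hm A B f -> Hm D (ρ c A) t ->
  θi a b B ∘ ρm c f ∘ t = ρm a (ρm b f) ∘ θi a b A ∘ t.
Proof.
move=> e ec hf ht; subst c; have [oA oB hf'] := hf.
case ea: (gp a); case eb: (gp b); move: (e); rewrite (gpiM HG) ea eb // => _.
all: have -> : ρm (a * b) f ∘ t = ρm (a * b) f ∘ θ a b A ∘ θi a b A ∘ t by rw (cancelR HC (f := θ a b A)).
all: rwl nat_e; canc.
Qed.
Lemma nati_o a b c A B D f t : gp (a * b) = true -> a * b = c -> Hm A B f -> Hm D (ρ c B) t ->
  θi a b A ∘ ρm c f ∘ t = ρm a (ρm b f) ∘ θi a b B ∘ t.
Proof.
move=> e ec hf ht; subst c; have [oA oB hf'] := hf.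
case ea: (gp a); case eb: (gp b); move: (e); rewrite (gpiM HG) ea eb // => _.
all: have -> : ρm (a * b) f ∘ t = ρm (a * b) f ∘ θ a b B ∘ θi a b B ∘ t by rw (cancelR HC (f := θ a b B)).
all: rwl nat_o; canc.
Qed.

Definition FHom (X Y : Obj C * (Gsub Gh -> Mor C)) f :=
  Hm X.1 Y.1 f /\ forall x, gp x = false -> gat Y.2 x ∘ f = ρm x f ∘ gat X.2 x.

Lemma unat X Y f x D t : FHom X Y f -> hfp R X -> hfp R Y -> gp x = false -> Hm D X.1 t ->
  gat Y.2 x ∘ f ∘ t = ρm x f ∘ gat X.2 x ∘ t.
Proof.
move=> [hf Ef] hX hY ex ht.
rwl (cA HC (f := gat Y.2 x)); rewrite Ef //; rw (cA HC).
Qed.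
Lemma uinat X Y f x D t : FHom X Y f -> hfp R X -> hfp R Y -> gp x = false -> Hm D (ρ x X.1) t ->
  f ∘ ui X x ∘ t = ui Y x ∘ ρm x f ∘ t.
Proof.
move=> [hf Ef] hX hY ex ht.
have -> : f ∘ ui X x ∘ t = ui Y x ∘ gat Y.2 x ∘ f ∘ ui X x ∘ t by canc.
rw (unat (Y := Y) (conj hf Ef)); canc.
Qed.

Lemma Pair_comp A B D f g f' g' : Pair A B f g -> Pair B D f' g' -> Pair A D (f' ∘ f) (g ∘ g').
Proof.
move=> P P'; have [Cf Cg _ _] := P; have [Cf' Cg' _ _] := P'.
split; [eapply (Cl_comp HC); eassumption | eapply (Cl_comp HC); eassumption | | ].
  rw (cA HC); rw (cancelL HC (f := f')); rw (cancelL0 (f := f)).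
rw (cA HC); rw (cancelR HC (f := f)); rw (cancelR0 (f := f')).
Qed.

Lemma ui_coc X x y xy : hfp R X -> gp x = false -> gp y = false -> x * y = xy ->
  ui X xy = ui X x ∘ ρm x (ui X y) ∘ θi x y X.1.
Proof.
move=> hX ex ey exy; have oX := hfp_ob hX; subst xy.
rewrite [LHS]/ui (hfp_coc hX ex ey erefl); apply/esym; apply: (Pair_inv HC).
erewrite <- (cA HC (f := ui X x)); try solve [sc].
eapply Pair_comp; [eapply Pair_comp; tyP | tyP].
Qed.

Lemma asc_e a b c ab bc A D t : gp a = false -> a * b = ab -> b * c = bc -> ob C A ->
  Hm D (ρ a (ρ b (ρ c A))) t ->
  θ ab c A ∘ θ a b (ρ c A) ∘ t = θ a bc A ∘ ρm a (θ b c A) ∘ t.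
Proof.
move=> ea <- <- oA ht; have E := r2_assoc HR a b c oA; rewrite /tpow ea in E.
rwl (cA HC (f := θ (a * b) c A)); rewrite E; rw (cA HC).
Qed.
Lemma asc_o a b c ab bc A D t : gp a = true -> a * b = ab -> b * c = bc -> ob C A ->
  Hm D (ρ a (ρ b (ρ c A))) t ->
  θ ab c A ∘ θ a b (ρ c A) ∘ t = θ a bc A ∘ ρm a (θi b c A) ∘ t.
Proof.
move=> ea <- <- oA ht; have E := r2_assoc HR a b c oA; rewrite /tpow ea in E; fold (θi b c A) in E.
rwl (cA HC (f := θ (a * b) c A)); rewrite E; rw (cA HC).
Qed.


Lemma iso_inj A B D f g x y : Pair A B f g -> Hm D A x -> Hm D A y -> f ∘ x = f ∘ y -> x = y.
Proof.
move=> P hx hy E.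
by rewrite -(cancelL HC P hx) E (cancelL HC P hy).
Qed.
Ltac mulL f g := eapply (iso_inj (f:=f) (g:=g)); [tyP | tyH | tyH | ].

Lemma ascV1_e a b c ab bc A D t : gp a = false -> a * b = ab -> b * c = bc -> ob C A ->
  Hm D (ρ (a * b) (ρ c A)) t ->
  ρm a (θ b c A) ∘ θi a b (ρ c A) ∘ t = θi a bc A ∘ θ ab c A ∘ t.
Proof.
move=> ea eab ebc oA ht; subst ab bc.
case eb: (gp b); case ec: (gp c).
all: mulL (θ a (b * c) A) (θi a (b * c) A); nrm.
all: rwl (asc_e (a := a) (b := b) (c := c)); nrm.
Qed.
Lemma ascV2_e a b c ab bc A D t : gp a = false -> a * b = ab -> b * c = bc -> ob C A ->
  Hm D (ρ (a * bc) A) t ->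
  θ a b (ρ c A) ∘ ρm a (θi b c A) ∘ θi a bc A ∘ t = θi ab c A ∘ t.
Proof.
move=> ea eab ebc oA ht; subst ab bc.
case eb: (gp b); case ec: (gp c).
all: mulL (θ (a * b) c A) (θi (a * b) c A); nrm.
all: rw (asc_e (a := a) (b := b) (c := c)); nrm.
Qed.
Lemma ascV1_o a b c ab bc A D t : gp a = true -> a * b = ab -> b * c = bc -> ob C A ->
  Hm D (ρ (a * b) (ρ c A)) t ->
  ρm a (θi b c A) ∘ θi a b (ρ c A) ∘ t = θi a bc A ∘ θ ab c A ∘ t.
Proof.
move=> ea eab ebc oA ht; subst ab bc.
case eb: (gp b); case ec: (gp c).
all: mulL (θ a (b * c) A) (θi a (b * c) A); nrm.
all: rwl (asc_o (a := a) (b := b) (c := c)); nrm.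
Qed.
Lemma ascV2_o a b c ab bc A D t : gp a = true -> a * b = ab -> b * c = bc -> ob C A ->
  Hm D (ρ (a * bc) A) t ->
  θ a b (ρ c A) ∘ ρm a (θ b c A) ∘ θi a bc A ∘ t = θi ab c A ∘ t.
Proof.
move=> ea eab ebc oA ht; subst ab bc.
case eb: (gp b); case ec: (gp c).
all: mulL (θ (a * b) c A) (θi (a * b) c A); nrm.
all: rw (asc_o (a := a) (b := b) (c := c)); nrm.
Qed.

Lemma Pv s X x : gp x = false ->
  gat (Pobj R s X).2 x = θi x s X.1 ∘ θ s (gi s * (x * s)) X.1 ∘ ρm s (ui X (gi s * (x * s))).
Proof. move=> ex; have px : ~~ gp x by rewrite ex. by rewrite (gatS _ px). Qed.

Lemma Pcoc s X x2 x1 : gp s = true -> hfp R X -> gp x2 = false -> gp x1 = false ->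
  gat (Pobj R s X).2 (x2 * x1) =
  θ x2 x1 (ρ s X.1) ∘ ρm x2 (gat (Pobj R s X).2 x1) ∘ gat (Pobj R s X).2 x2.
Proof.
move=> es hX e2 e1; have oX := hfp_ob hX.
rewrite !Pv //; last by rewrite (gpiM HG) e1 e2.
ti; nrm.
rw (ui_coc (X := X) (x := gi s * x2 * s) (y := gi s * x1 * s) (xy := gi s * x2 * x1 * s)); nrm.
rwl (asc_o (a:=s) (b:= gi s * x2 * s) (c:= gi s * x1 * s)); nrm.
rw (nat_o (a:=s) (b:=gi s * x2 * s)); nrm.
rwl (nati_o (a := x2) (b := s)); nrm.
rw (ascV1_e (a:=x2) (b:=s) (c:= gi s*x1*s)); nrm.
rw (ascV2_e (a:=x2)(b:=x1)(c:=s)); nrm.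
Qed.
Lemma Iso_dgiso A B f : Iso A B f -> dgiso C A B f.
Proof. by case=> [[[? ? ?] [? ?]] [g Hg]]; split; [split | exists g]. Qed.

Lemma Pv_Pair s X x : gp s = true -> hfp R X -> gp x = false ->
  Pair (ρ s X.1) (ρ x (ρ s X.1)) (gat (Pobj R s X).2 x)
    (ρm s (gat X.2 (gi s * x * s)) ∘ θi s (gi s * x * s) X.1 ∘ θ x s X.1).
Proof.
move=> es hX ex; have oX := hfp_ob hX.
rewrite Pv //; gn.
erewrite <- (cA HC (f := ρm s (gat X.2 _))); try solve [sc].
eapply Pair_comp; [eapply Pair_comp; tyP | tyP].
Qed.

Lemma P_hfp s X : gp s = true -> hfp R X -> hfp R (Pobj R s X).
Proof.
move=> es hX; have oX := hfp_ob hX; split.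
- exact: ob_rho.
- move=> g; have eg : gp (val g) = false := negbTE (valP g).
  rewrite -gat_val; apply: Iso_dgiso; exact: (Pair_Iso (Pv_Pair es hX eg)).
- move=> g2 g1; have e2 : gp (val g2) = false := negbTE (valP g2).
  have e1 : gp (val g1) = false := negbTE (valP g1).
  rewrite -(gat_val (Pobj R s X).2 g1) -(gat_val (Pobj R s X).2 g2).
  exact: Pcoc.
Qed.

Lemma uinat0 X Y f x : FHom X Y f -> hfp R X -> hfp R Y -> gp x = false ->
  f ∘ ui X x = ui Y x ∘ ρm x f.
Proof.
move=> F hX hY ex; have [hf _] := F.
have E := uinat F hX hY ex (t := idm C (ρ x X.1)) (D := ρ x X.1).
have h1 : Hm (ρ x X.1) Y.1 (f ∘ ui X x) by tyH.
have h2 : Hm (ρ x X.1) Y.1 (ui Y x ∘ ρm x f) by tyH.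
apply: (tail_intro h1 h2); rw (cA HC); rw (cA HC); apply: E; tyH.
Qed.

Lemma P_hom s X Y f : gp s = true -> hfp R X -> hfp R Y -> FHom X Y f ->
  FHom (Pobj R s Y) (Pobj R s X) (ρm s f).
Proof.
move=> es hX hY F; have [hf _] := F; have oX := hfp_ob hX; have oY := hfp_ob hY.
split; first by tyH.
move=> x ex; rewrite !Pv //; ti; nrm.
set h := (gi s * x * s).
erewrite <- (cA HC (f := ρm s (ui X h))); try solve [sc].
rwl (rhoS_or (s:=s) (f:=f) (g:=ui X h)).
rewrite (uinat0 F hX hY) //; last by rewrite /h; gpit.
nrm.
rw (nat_o (a:=s) (b:=h)); nrm.
rw (nati_o (a:=x) (b:=s)); nrm.
Qed.


Lemma ascV3_e a b c ab bc A D t : gp a = false -> a * b = ab -> b * c = bc -> ob C A ->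
  Hm D (ρ (a * bc) A) t ->
  ρm a (θi b c A) ∘ θi a bc A ∘ t = θi a b (ρ c A) ∘ θi ab c A ∘ t.
Proof.
move=> ea eab ebc oA ht; subst ab bc.
case eb: (gp b); case ec: (gp c).
all: mulL (θ a b (ρ c A)) (θi a b (ρ c A)); nrm.
all: rw (ascV2_e (a := a) (b := b) (c := c)); nrm.
Qed.
Lemma ascV3_o a b c ab bc A D t : gp a = true -> a * b = ab -> b * c = bc -> ob C A ->
  Hm D (ρ (a * bc) A) t ->
  ρm a (θ b c A) ∘ θi a bc A ∘ t = θi a b (ρ c A) ∘ θi ab c A ∘ t.
Proof.
move=> ea eab ebc oA ht; subst ab bc.
case eb: (gp b); case ec: (gp c).
all: mulL (θ a b (ρ c A)) (θi a b (ρ c A)); nrm.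
all: rw (ascV2_o (a := a) (b := b) (c := c)); nrm.
Qed.
Lemma ascV4_e a b c ab bc A D t : gp a = false -> a * b = ab -> b * c = bc -> ob C A ->
  Hm D (ρ a (ρ bc A)) t ->
  θ a b (ρ c A) ∘ ρm a (θi b c A) ∘ t = θi ab c A ∘ θ a bc A ∘ t.
Proof.
move=> ea eab ebc oA ht; subst ab bc.
case eb: (gp b); case ec: (gp c).
all: mulL (θ (a * b) c A) (θi (a * b) c A); nrm.
all: rw (asc_e (a := a) (b := b) (c := c)); nrm.
Qed.
Lemma ascV4_o a b c ab bc A D t : gp a = true -> a * b = ab -> b * c = bc -> ob C A ->
  Hm D (ρ a (ρ bc A)) t ->
  θ a b (ρ c A) ∘ ρm a (θ b c A) ∘ t = θi ab c A ∘ θ a bc A ∘ t.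
Proof.
move=> ea eab ebc oA ht; subst ab bc.
case eb: (gp b); case ec: (gp c).
all: mulL (θ (a * b) c A) (θi (a * b) c A); nrm.
all: rw (asc_o (a := a) (b := b) (c := c)); nrm.
Qed.

Lemma cocT X x y xy D t : hfp R X -> gp x = false -> gp y = false -> x * y = xy -> Hm D X.1 t ->
  θ x y X.1 ∘ ρm x (gat X.2 y) ∘ gat X.2 x ∘ t = gat X.2 xy ∘ t.
Proof.
move=> hX ex ey exy ht; have oX := hfp_ob hX.
rewrite (hfp_coc hX ex ey exy); subst xy; nrm.
Qed.
Lemma coc_r X x y xy D t : hfp R X -> gp x = false -> gp y = false -> x * y = xy -> Hm D X.1 t ->
  ρm x (gat X.2 y) ∘ gat X.2 x ∘ t = θi x y X.1 ∘ gat X.2 xy ∘ t.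
Proof.
move=> hX ex ey exy ht; have oX := hfp_ob hX; subst xy.
mulL (θ x y X.1) (θi x y X.1); nrm.
rw (cocT (X := X) (x := x) (y := y)); nrm.
Qed.
Lemma coc_r0 X x y xy : hfp R X -> gp x = false -> gp y = false -> x * y = xy ->
  ρm x (gat X.2 y) ∘ gat X.2 x = θi x y X.1 ∘ gat X.2 xy.
Proof.
move=> hX ex ey exy; have oX := hfp_ob hX; subst xy.
ti; nrm; rw (coc_r (X := X) (x := x) (y := y)); nrm.
Qed.

Lemma ThetaE s X : Theta R s X = θi s s X.1 ∘ gat X.2 (s * s).
Proof. by []. Qed.
Lemma Pui s X x : gp s = true -> hfp R X -> gp x = false ->
  ui (Pobj R s X) x = ρm s (gat X.2 (gi s * x * s)) ∘ θi s (gi s * x * s) X.1 ∘ θ x s X.1.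
Proof. move=> es hX ex; apply/esym; exact: (Pair_inv HC (Pv_Pair es hX ex)). Qed.

Lemma Theta_hom s X : gp s = true -> hfp R X ->
  FHom X (Pobj R s (Pobj R s X)) (Theta R s X).
Proof.
move=> es hX; have oX := hfp_ob hX; have hP := P_hfp es hX.
split; first by rewrite ThetaE /=; tyH.
move=> x ex; rewrite ThetaE Pv //; rewrite Pui //; last by gpit.
rewrite /=; ti; nrm.
rwl (nati_e (a := s) (b := s)); nrm.
rw (coc_r (X := X) (x := s * s) (y := gi s * gi s * x * s * s)); nrm.
rw (coc_r (X := X) (x := x) (y := s * s)); nrm.
rw (ascV3_e (a := x) (b := s) (c := s)); nrm.
rw (ascV4_o (a := s) (b := gi s * x * s) (c := s)); nrm.
rwl (asc_o (a := s) (b := s) (c := gi s * gi s * x * s * s)); nrm.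
Qed.

Lemma Theta_nat s X Y f : gp s = true -> hfp R X -> hfp R Y -> FHom X Y f ->
  Theta R s Y ∘ f = ρm s (ρm s f) ∘ Theta R s X.
Proof.
move=> es hX hY F; have [hf _] := F; have oX := hfp_ob hX; have oY := hfp_ob hY.
rewrite !ThetaE; ti; nrm.
rw (unat (X := X) (Y := Y) (x := s * s) F); nrm.
rw (nati_e (a := s) (b := s)); nrm.
Qed.

Lemma Theta_dual s X : gp s = true -> hfp R X ->
  ρm s (Theta R s X) ∘ Theta R s (Pobj R s X) = idm C (ρ s X.1).
Proof.
move=> es hX; have oX := hfp_ob hX.
rewrite !ThetaE Pv /=; last by gpit.
ti; nrm.
rw (ascV1_o (a := s) (b := s) (c := s)); nrm.
Qed.


Lemma phiE s1 s2 X : phi R s1 s2 X = ρm s2 (gat X.2 (gi s2 * s1)) ∘ θi s2 (gi s2 * s1) X.1.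
Proof. by []. Qed.

Lemma ucomm X s1 s2 x : hfp R X -> gp s1 = true -> gp s2 = true -> gp x = false ->
  gat X.2 (gi s2 * s1) ∘ ui X (gi s2 * x * s2) =
  ρm (gi s2 * s1) (ui X (gi s1 * x * s1)) ∘ θi (gi s2 * s1) (gi s1 * x * s1) X.1
    ∘ θ (gi s2 * x * s2) (gi s2 * s1) X.1 ∘ ρm (gi s2 * x * s2) (gat X.2 (gi s2 * s1)).
Proof.
move=> hX e1 e2 ex; have oX := hfp_ob hX.
ti; nrm.
mulL (ρm (gi s2 * s1) (gat X.2 (gi s1 * x * s1))) (ρm (gi s2 * s1) (ui X (gi s1 * x * s1))); nrm.
mulL (θ (gi s2 * s1) (gi s1 * x * s1) X.1) (θi (gi s2 * s1) (gi s1 * x * s1) X.1); nrm.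
rw (cocT (X := X) (x := gi s2 * s1) (y := gi s1 * x * s1) (xy := gi s2 * x * s1)); nrm.
rw (hfp_coc (X := X) (x := gi s2 * x * s2) (y := gi s2 * s1) (xy := gi s2 * x * s1)); nrm.
Qed.

Lemma phi_hom s1 s2 X : gp s1 = true -> gp s2 = true -> hfp R X ->
  FHom (Pobj R s1 X) (Pobj R s2 X) (phi R s1 s2 X).
Proof.
move=> e1 e2 hX; have oX := hfp_ob hX.
split; first by rewrite phiE /=; tyH.
move=> x ex; rewrite !Pv // phiE /=; ti; nrm.
set t := gi s2 * s1.
erewrite <- (cA HC (f := ρm s2 (ui X _))); try solve [sc].
rwl (rhoS_ol (s:=s2) (f:=gat X.2 t)).
rewrite /t (ucomm hX e1 e2 ex).
rewrite /t; nrm.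
rw (nat_o (a := s2) (b := gi s2 * x * s2)); nrm.
rwl (nati_o (a := s2) (b := gi s2 * s1)); nrm.
rw (nati_o (a := x) (b := s2)); nrm.
rw (ascV4_o (a := s2) (b := gi s2 * x * s2) (c := gi s2 * s1)); nrm.
rw (ascV1_o (a := s2) (b := gi s2 * s1) (c := gi s1 * x * s1)); nrm.
rw (ascV3_e (a := x) (b := s2) (c := gi s2 * s1)); nrm.
Qed.

Lemma phi_nat s1 s2 X Y f : gp s1 = true -> gp s2 = true -> hfp R X -> hfp R Y -> FHom X Y f ->
  phi R s1 s2 X ∘ ρm s1 f = ρm s2 f ∘ phi R s1 s2 Y.
Proof.
move=> e1 e2 hX hY F; have [hf Ef] := F; have oX := hfp_ob hX; have oY := hfp_ob hY.
rewrite !phiE; ti; nrm.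
rw (nati_o (a := s2) (b := gi s2 * s1)); nrm.
erewrite <- (cA HC (f := ρm s2 (gat X.2 _))); try solve [sc].
rwl (rhoS_or (s:=s2) (g:=gat X.2 (gi s2 * s1))).
rewrite -Ef; last by gpit.
nrm.
Qed.

Lemma phi_Theta s1 s2 X : gp s1 = true -> gp s2 = true -> hfp R X ->
  ρm s2 (phi R s1 s2 X) ∘ Theta R s2 X = phi R s1 s2 (Pobj R s1 X) ∘ Theta R s1 X.
Proof.
move=> e1 e2 hX; have oX := hfp_ob hX; have hP := P_hfp e1 hX.
rewrite !phiE !ThetaE Pv /=; last by gpit.
ti; nrm.
rwl (nati_e (a := s2) (b := s2)); nrm.
rw (coc_r (X := X) (x := s2 * s2) (y := gi s2 * s1)); nrm.
rw (ascV1_o (a := s2) (b := s2) (c := gi s2 * s1)); nrm.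
rw (hfp_coc (X := X) (x := s2 * s1) (y := gi s1 * gi s2 * s1 * s1) (xy := s1 * s1)); nrm.
rw (ascV1_o (a := s2) (b := gi s2 * s1) (c := s1)); nrm.
rwl (ascV1_o (a := s2) (b := s1) (c := gi s1 * gi s2 * s1 * s1)); nrm.
rw (nati_e (a := s2) (b := s1)); nrm.
Qed.

Lemma phi_coc s1 s2 s3 X : gp s1 = true -> gp s2 = true -> gp s3 = true -> hfp R X ->
  phi R s1 s3 X = phi R s2 s3 X ∘ phi R s1 s2 X.
Proof.
move=> e1 e2 e3 hX; have oX := hfp_ob hX.
rewrite !phiE; ti; nrm.
rw (nati_o (a := s3) (b := gi s3 * s2)); nrm.
erewrite <- (cA HC (f := ρm s3 (gat X.2 (gi s3 * s2)))); try solve [sc].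
rwl (rhoS_ol (s:=s3) (f := ρm (gi s3 * s2) (gat X.2 (gi s2 * s1)))).
rewrite (coc_r0 (X := X) (x := gi s3 * s2) (y := gi s2 * s1) (xy := gi s3 * s1)) //;
  try gpit; try (gn; reflexivity).
nrm.
rw (ascV1_o (a := s3) (b := gi s3 * s2) (c := gi s2 * s1)); nrm.
Qed.


Lemma FHom_hom X Y f : hfp R X -> hfp R Y -> FHom X Y f -> hom (fixcat R) X Y f.
Proof.
move=> hX hY [[_ _ hf] Ef]; split=> // g.
have eg : gp (val g) = false := negbTE (valP g).
rewrite -(gat_val Y.2 g) -(gat_val X.2 g); exact: Ef.
Qed.
Lemma hom_FHom X Y f : hfp R X -> hfp R Y -> hom (fixcat R) X Y f -> FHom X Y f.
Proof.
move=> hX hY [hf Ef]; split; first by split=> //; exact: hfp_ob.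
move=> x ex; have px : ~~ gp x by rewrite ex.
by rewrite !(gatS _ px) Ef.
Qed.

Lemma fix_dgiso X Y f g : hfp R X -> hfp R Y -> Pair X.1 Y.1 f g -> FHom X Y f ->
  dgiso (fixcat R) X Y f.
Proof.
move=> hX hY P F; have oX := hfp_ob hX; have oY := hfp_ob hY.
have [[hf [df xf]] [hg _] e1 e2] := P.
split; first by split; [exact: FHom_hom | exact: df | exact: xf].
exists g; split=> //; apply: FHom_hom => //; split=> // x ex.
ti; nrm.
mulL (ρm x f) (ρm x g); nrm.
rwl (unat (X := X) (Y := Y) (x := x) F); nrm.
Qed.

Lemma P_fun s : gp s = true -> is_dgfun true (fixcat R) (fixcat R) (Pobj R s) (ρm s).
Proof.
move=> es; have Fs := r2_fun HR s; rewrite es in Fs.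
split.
- move=> A hA; exact: P_hfp.
- move=> A B f hA hB hf; apply: FHom_hom; try exact: P_hfp.
  apply: P_hom => //; exact: hom_FHom.
- move=> A B f g hA hB [hf _] [hg _]; exact: (fun_D Fs (hfp_ob hA) (hfp_ob hB) hf hg).
- move=> A B a f hA hB [hf _]; exact: (fun_Z Fs a (hfp_ob hA) (hfp_ob hB) hf).
- move=> A B i f hA hB [hf _] df; exact: (fun_deg Fs (hfp_ob hA) (hfp_ob hB) hf df).
- move=> A B f hA hB [hf _]; exact: (fun_dif Fs (hfp_ob hA) (hfp_ob hB) hf).
- move=> A hA; exact: (fun_id Fs (hfp_ob hA)).
- move=> A B E i j f g hA hB hE [hf _] [hg _] df dg.
  exact: (fun_comp Fs (hfp_ob hA) (hfp_ob hB) (hfp_ob hE) hf hg df dg).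
Qed.

Lemma id_fun : is_dgfun false (fixcat R) (fixcat R) (fun X => X) (fun f => f).
Proof.
split; intros; try assumption; reflexivity.
Qed.

Lemma Theta_Pair s X : hfp R X ->
  Pair X.1 (ρ s (ρ s X.1)) (Theta R s X) (ui X (s * s) ∘ θ s s X.1).
Proof.
move=> hX; have oX := hfp_ob hX; rewrite ThetaE.
case es: (gp s).
all: eapply Pair_comp; [tyP | tyP].
Qed.

Lemma part1 s : gp s = true -> is_duality (fixcat R) (Pobj R s) (ρm s) (Theta R s).
Proof.
move=> es; split.
- exact: P_fun.
- split; first split.
  + move=> A hA; have oA := hfp_ob hA; have [[hT [dT xT]] _ _ _] := Theta_Pair s hA.
    have hPP : hfp R (Pobj R s (Pobj R s A)) := P_hfp es (P_hfp es hA).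
    split; [apply: FHom_hom => //; exact: Theta_hom | exact: dT | exact: xT].
  + move=> A B f hA hB hf /=; apply: Theta_nat => //; exact: hom_FHom.
  + move=> A hA; have hPP : hfp R (Pobj R s (Pobj R s A)) := P_hfp es (P_hfp es hA).
    apply: fix_dgiso => //; first exact: Theta_Pair.
    exact: Theta_hom.
- move=> A hA /=; exact: Theta_dual.
Qed.

Lemma phi_Pair s1 s2 X : gp s1 = true -> gp s2 = true -> hfp R X ->
  Pair (ρ s1 X.1) (ρ s2 X.1) (phi R s1 s2 X)
    (θ s2 (gi s2 * s1) X.1 ∘ ρm s2 (ui X (gi s2 * s1))).
Proof.
move=> e1 e2 hX; have oX := hfp_ob hX; rewrite phiE.
eapply Pair_comp; [tyP | tyP].
Qed.

Lemma part2 s1 s2 : gp s1 = true -> gp s2 = true ->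
  is_form_equiv (fixcat R) (fixcat R)
       (Pobj R s1) (ρm s1) (Theta R s1)
       (Pobj R s2) (ρm s2) (Theta R s2)
       (fun X => X) (fun f => f) (phi R s1 s2).
Proof.
move=> e1 e2; split.
- split.
  + exact: id_fun.
  + split.
    * move=> A hA; have [[hp [dp xp]] _ _ _] := phi_Pair e1 e2 hA.
      have h1 := P_hfp e1 hA; have h2 := P_hfp e2 hA.
      split; [apply: FHom_hom => //; exact: phi_hom | exact: dp | exact: xp].
    * move=> A B f hA hB hf /=; apply: phi_nat => //; exact: hom_FHom.
  + move=> A hA /=; exact: phi_Theta.
- split.
  + exact: id_fun.
  + move=> A B f' hA hB hf; exists f'; split=> //; by move=> y [_ ->].
  + move=> B hB; exists B; split=> //; exists (idm C B.1).
    have oB := hfp_ob hB.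
    apply: fix_dgiso => //.
      split; [exact: Cl_id | exact: Cl_id | rw (c1l HC) | rw (c1l HC)].
    split; first by tyH.
    move=> x ex; rewrite rho_id //; rw (c1l HC); rw (c1r HC).
- move=> A hA; have h1 := P_hfp e1 hA; have h2 := P_hfp e2 hA.
  apply: fix_dgiso => //; first exact: (phi_Pair e1 e2 hA).
  exact: phi_hom.
Qed.

End Rep.

Theorem mainTheorem12 (k : fieldType) (C : dgcat k) (Gh : c2group)
    (R : r2rep C Gh) :
  (2%:R : k) != 0 -> is_dgcat C -> is_c2group Gh -> is_r2rep R ->
  (* (i) *)
  (forall s, gpi Gh s ->
     is_duality (fixcat R) (Pobj R s) (rho_m R s) (Theta R s)) /\
  (* (ii) form equivalences *)
  (forall s1 s2, gpi Gh s1 -> gpi Gh s2 ->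
     is_form_equiv (fixcat R) (fixcat R)
       (Pobj R s1) (rho_m R s1) (Theta R s1)
       (Pobj R s2) (rho_m R s2) (Theta R s2)
       (fun X => X) (fun f => f) (phi R s1 s2)) /\
  (* (ii) cocycle identity (id, phi13) = (id, phi23) o (id, phi12) *)
  (forall s1 s2 s3, gpi Gh s1 -> gpi Gh s2 -> gpi Gh s3 ->
     forall X, ob (fixcat R) X ->
       phi R s1 s3 X =
       form_comp_nt (fixcat R) (fixcat R) (fixcat R)
         (fun Y => Y) (fun f => f) (phi R s2 s3) (phi R s1 s2) X).
Proof.
move=> _ HC HG HR; split; [|split].
- move=> s es; exact: (part1 HC HG HR es).
- move=> s1 s2 e1 e2; exact: (part2 HC HG HR e1 e2).
- move=> s1 s2 s3 e1 e2 e3 X hX; rewrite /form_comp_nt /=.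
  exact: (phi_coc HC HG HR e1 e2 e3 hX).
Qed.
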